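(* Let $\varepsilon>0$ and $n\in\mathbb{N}$. Then $$\mu_n\left(\left\{r\in Q_n:\sum_{k=0}^{n-1}p(r)_k\ge n\left(\tfrac12+\varepsilon\right)\right\}\right)\le e^{-2\varepsilon^2n}$$ and $$\mu_n\left(\left\{r\in Q_n:\sum_{k=0}^{n-1}p(r)_k\le n\left(\tfrac12-\varepsilon\right)\right\}\right)\le e^{-2\varepsilon^2n},$$ where the $p(r)_k\in\mathbb{F}_2$ are summed as integers $0$ or $1$.
   Context: $\mathbb{F}_2((x^{-1}))$ is the field of formal series $r=\sum_{z\in\mathbb{Z}}a_zx^z$, $a_z\in\mathbb{F}_2$, with $a_z\ne0$ for only finitely many positive $z$; $\deg(r)=\max\{z:a_z\ne0\}$. The polynomial part is $[r]=\sum_{z\ge0}a_zx^z$. $S(r)=\frac{r}{x+1}$ if $[r](1)=0$ and $S(r)=\frac{xr}{x+1}$ if $[r](1)=1$; $p(r)_k=[S^k(r)](1)$. $Q_n=\{r:\deg(r)=n\}$ and $\mu_n$ is the probability measure on $Q_n$ under which the coefficients $a_{n-1},a_{n-2},\dots$ are independent and uniform in $\mathbb{F}_2$. *)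

(* Defs.v *)
From HB Require Import structures.
From mathcomp Require Import all_boot all_order all_algebra.
From mathcomp Require Import all_classical all_reals all_analysis.
Set Implicit Arguments. Unset Strict Implicit. Unset Printing Implicit Defensive.
Import Order.TTheory GRing.Theory Num.Theory.
Local Open Scope classical_set_scope.
Local Open Scope ring_scope.

(* Elements of F_2((x^-1)) with bounded positive support.                 *)
(* A series is a pair (N, a) : nat * (int -> bool) where a z is the       *)
(* coefficient of x^z (F_2 = bool, addition = addb) and N is a bound on   *)
(* the positive support: a z = false for all z > N (invariant maintained  *)
(* by all operations below; the values computed do not depend on which   *)
(* valid bound is used).                                                   *)
Definition series := (nat * (int -> bool))%type.

Definition xorsum (a : int -> bool) (lo : int) (len : nat) : bool :=
  \big[addb/false]_(j < len) a (lo + j%:Z).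

(* [r](1) : the polynomial part evaluated at 1, i.e. sum_{0<=z<=N} a_z *)
Definition polyat1 (r : series) : bool := xorsum r.2 0 r.1.+1.

(* r / (x+1) : since 1/(x+1) = sum_{j>=1} x^-j in F_2((x^-1)),
   its coefficient at x^z is sum_{z < w <= N} a_w. *)
Definition div_x1 (r : series) : series :=
  (r.1, fun z => if z < r.1%:Z then xorsum r.2 (z + 1) (absz (r.1%:Z - z)%R)
                 else false).

Definition mul_x (r : series) : series := (r.1.+1, fun z => r.2 (z - 1)).

Definition Sop (r : series) : series :=
  if polyat1 r then div_x1 (mul_x r) else div_x1 r.

Definition pseq (r : series) (k : nat) : bool := polyat1 (iter k Sop r).

(* The element of Q_n with a_n = 1 and a_{n-1-i} = w i for i : nat. *)
Definition ser_of (n : nat) (w : nat -> bool) : series :=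
  (n, fun z => if z == n%:Z then true
               else if z < n%:Z then w (absz (n%:Z - 1 - z)%R) else false).

(* The probability space for mu_n: sequences w : nat -> bool of the free   *)
(* coefficients (w i = a_{n-1-i}), with the sigma-algebra generated by the *)
(* cylinder sets, and the measure under which the coordinates are i.i.d.   *)
(* uniform on F_2 (characterized on the generating pi-system of prefix     *)
(* cylinders).                                                             *)
Definition prefix_cyl (m : nat) (b : nat -> bool) : set (nat -> bool) :=
  [set w | forall i, (i < m)%N -> w i = b i].

Definition cylinders : set (set (nat -> bool)) :=
  [set A | exists m b, A = prefix_cyl m b].

Definition coinT := g_sigma_algebraType cylinders.

Definition iid_uniform (R : realType) (P : probability coinT R) : Prop :=
  forall (m : nat) (b : nat -> bool),
    P (prefix_cyl m b : set coinT) = (((2:R)^-1) ^+ m)%:E.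

Definition psum (n : nat) (w : nat -> bool) : nat :=
  \sum_(k < n) nat_of_bool (pseq (ser_of n w) k).

(* Main.v *)
Require Import Defs.
Set Warnings "-all".
From HB Require Import structures.
From mathcomp Require Import all_boot all_order all_algebra all_field.
From mathcomp Require Import all_classical all_reals all_analysis.
From mathcomp Require Import zify ring.
Import numFieldNormedType.Exports.
Import Order.TTheory GRing.Theory Num.Theory.
Local Open Scope classical_set_scope.
Local Open Scope ring_scope.
Section Alg.
Local Notation F := 'F_2.

Definition bF (b : bool) : F := (nat_of_bool b)%:R.

Lemma F11 : (1 + 1 : F) = 0. Proof. by apply/eqP. Qed.
Lemma Fxx (x : F) : x + x = 0.
Proof. by rewrite -[x]mulr1 -mulrDr F11 mulr0. Qed.

Lemma bF_add a b : bF (addb a b) = bF a + bF b.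
Proof. by case: a; case: b; rewrite /bF /= ?addr0 ?add0r ?F11. Qed.

Lemma bF_inj : injective bF.
Proof. by case; case => //= /eqP; rewrite /bF /= ?oner_eq0 // eq_sym oner_eq0. Qed.

Definition pol (r : Defs.series) : {poly F} := \poly_(i < r.1.+1) bF (r.2 i%:Z).

Lemma xorsumS a lo len : xorsum a lo len.+1 = addb (a lo) (xorsum a (lo + 1) len).
Proof.
rewrite /xorsum big_ord_recl addr0; congr addb; apply: eq_bigr => j _.
congr (a _); rewrite /= -addrA; congr (_ + _); lia.
Qed.

Lemma xorsum0 a lo : xorsum a lo 0 = false.
Proof. by rewrite /xorsum big_ord0. Qed.

Lemma bF_xorsum a lo len : bF (xorsum a lo len) = \sum_(j < len) bF (a (lo + j%:Z)).
Proof. by rewrite /xorsum (big_morph bF bF_add (erefl _)). Qed.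

Lemma pol1 r : (pol r).[1] = bF (polyat1 r).
Proof.
rewrite /pol horner_poly /polyat1 bF_xorsum; apply: eq_bigr => i _.
by rewrite expr1n mulr1 add0r.
Qed.

Lemma coef_pol r i : (pol r)`_i = if (i <= r.1)%N then bF (r.2 i%:Z) else 0.
Proof. by rewrite /pol coef_poly ltnS. Qed.

Lemma div_coef r (i : nat) : (div_x1 r).2 i%:Z = xorsum r.2 (i.+1)%:Z (r.1 - i)%N.
Proof.
rewrite /div_x1 /=; case: ifPn => H.
  congr xorsum; lia.
have -> : (r.1 - i = 0)%N by lia.
by rewrite xorsum0.
Qed.

Lemma pol_div r : pol (div_x1 r) * ('X + 1) = pol r + (bF (polyat1 r))%:P.
Proof.
apply/polyP => j; rewrite mulrDr mulr1 !coefD coefMX coefC !coef_pol !div_coef.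
rewrite (_ : (div_x1 r).1 = r.1) //.
case: j => [|i] /=.
  by rewrite add0r /polyat1 xorsumS bF_add addrA Fxx add0r subn0 add0r.
rewrite addr0.
case: (ltnP i r.1) => H.
  rewrite (ltnW H).
  have -> : (r.1 - i = (r.1 - i.+1).+1)%N by lia.
  rewrite xorsumS bF_add (_ : (i.+1%:Z + 1) = i.+2%:Z); last by lia.
  by rewrite -addrA Fxx addr0.
have -> : (r.1 - i = 0)%N by lia.
rewrite xorsum0 /bF /= mulr0n.
by case: (i <= r.1)%N; rewrite ?addr0 //=; case: ifP => _; rewrite ?addr0.
Qed.

Lemma pol_mulx r : pol (mul_x r) = 'X * pol r + (bF (r.2 (-1)))%:P.
Proof.
apply/polyP => j; rewrite coefD coefXM coefC !coef_pol /=.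
case: j => [|i] /=; first by rewrite !add0r.
rewrite [RHS]addr0 ltnS; case: ifP => // _; congr (bF (r.2 _)); lia.
Qed.

Lemma pol_S r : pol (Sop r) * ('X + 1) = if polyat1 r then 'X * pol r + 1 else pol r.
Proof.
rewrite /Sop; case: ifP => H; rewrite pol_div.
  rewrite -pol1 pol_mulx hornerD hornerM hornerX hornerC mul1r pol1 H.
  rewrite -addrA; congr (_ + _); rewrite polyCD addrA [X in X + _]addrC.
  by rewrite -addrA -polyCD Fxx addr0 /bF /= mulr1n polyC1.
by rewrite H /bF /= mulr0n polyC0 addr0.
Qed.

Definition Pk r k := pol (iter k Sop r).

Lemma pseq_Pk r k : bF (pseq r k) = (Pk r k).[1].
Proof. by rewrite pol1. Qed.

Lemma Pk_S r k : Pk r k.+1 * ('X + 1) = if pseq r k then 'X * Pk r k + 1 else Pk r k.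
Proof. by rewrite /Pk iterS pol_S. Qed.

Lemma X1_neq0 : ('X + 1 : {poly F}) != 0.
Proof.
by rewrite -size_poly_eq0 size_XaddC.
Qed.

Lemma det_pseq r r' : pol r = pol r' -> forall k, pseq r k = pseq r' k.
Proof.
move=> H.
have E : forall k, Pk r k = Pk r' k.
  elim=> [|k IH] //; apply: (mulIf X1_neq0); rewrite !Pk_S.
  have -> : pseq r k = pseq r' k by apply: bF_inj; rewrite !pseq_Pk IH.
  by rewrite IH.
by move=> k; apply: bF_inj; rewrite !pseq_Pk E.
Qed.

Lemma inj_pseq_aux r r' n : (forall k, (k < n)%N -> pseq r k = pseq r' k) ->
  exists e, ('X + 1) ^+ n * (Pk r n - Pk r' n) = 'X ^+ e * (pol r - pol r').
Proof.
elim: n => [|n IH] H.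
  by exists 0%N; rewrite !expr0 !mul1r.
have [e He] := IH (fun k hk => H k (ltnW hk)).
have Hn := H n (ltnSn n).
exists (e + pseq r n)%N.
rewrite exprSr -mulrA mulrBr ![_ * Pk _ n.+1]mulrC !Pk_S Hn.
case: (pseq r' n).
  by rewrite opprD addrACA subrr addr0 -mulrBr mulrCA He mulrA -exprS addn1.
by rewrite He addn0.
Qed.

Lemma inj_pseq r r' n : (forall k, (k < n)%N -> pseq r k = pseq r' k) ->
  (size (pol r - pol r')%R <= n)%N -> pol r = pol r'.
Proof.
move=> H Hs; have [e He] := inj_pseq_aux _ _ _ H.
apply/eqP; rewrite -subr_eq0; apply/negPn/negP => Hnz.
have Hd : (('X + 1) ^+ n %| 'X ^+ e * (pol r - pol r'))%R.
  by rewrite -He dvdp_mulIl.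
rewrite Gauss_dvdpr in Hd; last first.
  apply: coprimep_expl; apply: coprimep_expr.
  have Hc : coprimep ('X + 1 : {poly F}) ('X - 0%:P).
    by rewrite coprimep_XsubC rootE hornerD hornerX hornerC add0r oner_eq0.
  by rewrite polyC0 subr0 in Hc.
have := dvdp_leq Hnz Hd.
have := size_exp ('X + 1 : {poly F}) n; rewrite size_XaddC /= mul1n => Hs2.
have : (0 < size (('X + 1 : {poly F}) ^+ n))%N.
  by rewrite lt0n size_poly_eq0 expf_neq0 // X1_neq0.
move: Hs2 Hs; set a := size _; set b := size _. move=> Hs2 Hs H1 H2. 
lia.
Qed.
End Alg.
Lemma coef_ser n w (i : nat) : (ser_of n w).2 i%:Z =
  if i == n then true else if (i < n)%N then w (n - 1 - i)%N else false.
Proof.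
rewrite /ser_of /=.
case: (ltngtP i n) => H.
- have -> : (i%:Z == n%:Z) = false by apply/eqP; lia.
  have -> : (i%:Z < n%:Z) = true by lia.
  congr w; lia.
- have -> : (i%:Z == n%:Z) = false by apply/eqP; lia.
  have -> : (i%:Z < n%:Z) = false by lia.
  by [].
- by subst; rewrite eqxx.
Qed.

Lemma pol_ser_eq n w w' : (forall i, (i < n)%N -> w i = w' i) ->
  pol (ser_of n w) = pol (ser_of n w').
Proof.
move=> H; apply/polyP => j; rewrite !coef_pol !coef_ser /=.
case: (j == n) => //; case: ifP => // Hj; case: ifP => // Hj2; rewrite H //; lia.
Qed.

Lemma size_ser_diff n w w' : (size (pol (ser_of n w) - pol (ser_of n w'))%R <= n)%N.
Proof.
apply/leq_sizeP => j Hj; rewrite coefB !coef_pol !coef_ser /=.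
case: eqP => [_|Hne]; first by rewrite subrr.
have -> : (j < n)%N = false by lia.
by case: ifP => _; rewrite subrr.
Qed.

Lemma ser_inj n w w' : pol (ser_of n w) = pol (ser_of n w') ->
  forall j, (j < n)%N -> w j = w' j.
Proof.
move=> H0 j j_lt; move/polyP: H0 => /(_ (n - 1 - j)%N).
rewrite !coef_pol !coef_ser /=.
have -> : (n - 1 - j == n)%N = false by apply/eqP; lia.
have -> : (n - 1 - j < n)%N = true by lia.
have -> : (n - 1 - j <= n)%N = true by lia.
have -> : (n - 1 - (n - 1 - j) = j)%N by lia.
exact: bF_inj.
Qed.
Section Fin.
Variable n : nat.
Local Notation T := {ffun 'I_n -> bool}.

Definition ext (b : T) : nat -> bool :=
  fun i => if insub i is Some j then b j else false.

Lemma ext_ord (b : T) (j : 'I_n) : ext b j = b j.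
Proof.
rewrite /ext; case: insubP => [k _ Ek | ]; last by rewrite ltn_ord.
by congr (b _); apply: val_inj.
Qed.

Definition Phi (b : T) : T := [ffun k : 'I_n => pseq (ser_of n (ext b)) k].

Lemma Phi_inj : injective Phi.
Proof.
move=> b b' /ffunP H.
have Hp : forall k, (k < n)%N -> pseq (ser_of n (ext b)) k = pseq (ser_of n (ext b')) k.
  by move=> k hk; have := H (Ordinal hk); rewrite !ffunE.
have := ser_inj _ _ _ (inj_pseq _ _ _ Hp (size_ser_diff _ _ _)).
move=> E; apply/ffunP => j; rewrite -!ext_ord; exact: E.
Qed.

Lemma psum_Phi (b : T) : psum n (ext b) = (\sum_(k < n) Phi b k)%N.
Proof. by rewrite /psum; apply: eq_bigr => k _; rewrite ffunE. Qed.

Definition pref (w : nat -> bool) : T := [ffun i : 'I_n => w i].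

Lemma ext_pref w i : (i < n)%N -> ext (pref w) i = w i.
Proof. by move=> hi; rewrite (ext_ord _ (Ordinal hi)) ffunE. Qed.

Lemma psum_pref w : psum n w = psum n (ext (pref w)).
Proof.
rewrite /psum; apply: eq_bigr => k _; congr nat_of_bool; apply: det_pseq.
by apply: pol_ser_eq => i hi; rewrite ext_pref.
Qed.

Lemma psum_cyl (b : T) w : prefix_cyl n (ext b) w -> psum n w = psum n (ext b).
Proof.
move=> H; rewrite /psum; apply: eq_bigr => k _; congr nat_of_bool; apply: det_pseq.
by apply: pol_ser_eq => i hi; rewrite H.
Qed.

Lemma count_reindex (R : realType) (c : pred nat) :
  \sum_(b : T | c (psum n (ext b))) (1 : R) = \sum_(q : T | c (\sum_(k < n) q k)%N) 1.
Proof.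
rewrite [RHS](reindex_inj Phi_inj) /=; apply: eq_bigl => b; by rewrite psum_Phi.
Qed.
End Fin.
Arguments ext {n} b i.
Arguments pref {n} w.
Arguments Phi {n} b.
Arguments ext_ord {n} b j.
Arguments ext_pref {n} w i.
Arguments psum_pref {n} w.
Arguments psum_cyl {n b w}.
Lemma event_measure (R : realType) (P : probability coinT R) (HP : iid_uniform P)
  n (c : pred nat) :
  P ([set w | c (psum n w)] : set coinT) =
  ((\sum_(b : {ffun 'I_n -> bool} | c (psum n (ext b))) (1:R)) * (2^-1)^+n)%:E.
Proof.
pose D : {pred {ffun 'I_n -> bool}} := fun b => c (psum n (ext b)).
have E : [set w | c (psum n w)] =
    \bigcup_(b in [set` D]) (prefix_cyl n (ext b) : set coinT).
  apply/seteqP; split => w /=.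
  - move=> Hw; exists (pref w).
      by rewrite /= unfold_in /D /= -psum_pref.
    by move=> i hi; rewrite ext_pref.
  - by move=> [b Hb Hw]; rewrite (psum_cyl Hw); move: Hb; rewrite /= unfold_in.
rewrite E measure_fin_bigcup //.
- rewrite -(@bigfs _ _ _ _ (enum {ffun 'I_n -> bool})) ?enum_uniq //; last first.
    by move=> i _; rewrite mem_enum.
  rewrite big_enum_cond /=.
  under eq_bigr do rewrite HP.
  by rewrite sumEFin big_distrl /=; under [in RHS]eq_bigr do rewrite mul1r.
- move=> b b' _ _ [w [H1 H2]]; apply/ffunP => j; rewrite -!ext_ord -H1 // -H2 //.
- by move=> b _; apply: sub_sigma_algebra; exists n, (ext b).
Qed.
Lemma chernoff_count (R : realType) n (mu t : R) (c : pred nat) :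
  (forall m, c m -> mu * t <= mu * m%:R) ->
  \sum_(q : {ffun 'I_n -> bool} | c (\sum_(k < n) q k)%N) (1:R)
    <= expR (- (mu * t)) * (1 + expR mu) ^+ n.
Proof.
move=> Hc.
rewrite big_mkcond /=.
apply: (@le_trans _ _ (\sum_(q : {ffun 'I_n -> bool})
           expR (mu * (\sum_(k < n) q k)%N%:R - mu * t))).
  apply: ler_sum => q _; case: ifP => H.
    by rewrite -[X in X <= _]expR0 ler_expR subr_ge0; exact: Hc.
  exact: expR_ge0.
rewrite (_ : (1 + expR mu) = \sum_(b : bool) expR (mu * (nat_of_bool b)%:R)); last first.
  by rewrite big_bool /= mulr1 mulr0 expR0 addrC.
have -> : forall x : R, x ^+ n = \prod_(k < n) x.
  by move=> x; rewrite prodr_const card_ord.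
rewrite bigA_distr_bigA mulr_sumr; apply: ler_sum => q _.
rewrite addrC expRD; apply: ler_wpM2l; first exact: expR_ge0.
by rewrite natr_sum mulr_sumr expR_sum.
Qed.
Lemma fact_ge n : (2 ^ n * n`! <= (2 * n)`!)%N.
Proof.
elim: n => [|n IH] //.
rewrite expnS factS (_ : (2 * n.+1 = (2 * n).+2)%N); last by lia.
rewrite !factS.
have := leq_mul (leqnn (2 * n).+2) IH.
have : (0 < (2 * n)`!)%N := fact_gt0 _.
move: (2 ^ n)%N (n`!) ((2 * n)`!) => p a b Hb H.
nia.
Qed.

Lemma cosh_le (R : realType) (x : R) : (expR x + expR (-x)) / 2 <= expR (x ^+ 2 / 2).
Proof.
rewrite ler_pdivrMr // mulrC.
have Hu : (series (exp_coeff x) + series (exp_coeff (- x))) @ \oo --> expR x + expR (- x).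
  by apply: cvgD; apply: is_cvg_series_exp_coeff.
have Hg : (fun n => 2 * series (exp_coeff (x ^+ 2 / 2)) n) @ \oo --> 2 * expR (x ^+ 2 / 2).
  by apply: cvgM; [exact: cvg_cst | exact: is_cvg_series_exp_coeff].
apply: (ler_cvg_to Hu Hg); apply: nearW => N /=.
pose c k := exp_coeff x k + exp_coeff (- x) k.
have c_ge0 k : 0 <= c k.
  rewrite /c /exp_coeff /= -mulrDl divr_ge0 // exprNn.
  case/boolP: (odd k) => Hk.
    by rewrite -signr_odd Hk expr1 mulN1r addrN.
  rewrite -signr_odd (negbTE Hk) expr0 mul1r -mulr2n mulrn_wge0 //.
  have -> : k = (k./2 * 2)%N by rewrite muln2 -[LHS]odd_double_half (negbTE Hk).
  by rewrite exprM sqr_ge0.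
have c_odd j : c (2 * j)%N.+1 = 0.
  rewrite /c /exp_coeff /= -mulrDl [(- x) ^+ _]exprNn -signr_odd /=.
  by rewrite oddM andFb expr1 mulN1r addrN mul0r.
have c_even j : c (2 * j)%N = 2 * (x ^+ (2 * j)%N / (2 * j)%N`!%:R).
  rewrite /c /exp_coeff /= [(- x) ^+ _]exprNn -signr_odd /=.
  by rewrite oddM andFb expr0 mul1r -mulrDl -mulr2n mulr_natl mulrnAl.
have -> : (series (exp_coeff x) + series (exp_coeff (- x))) N = \sum_(0 <= k < N) c k.
  by rewrite /c big_split.
have H1 : \sum_(0 <= k < N) c k <= \sum_(0 <= k < (2 * N)%N) c k.
  rewrite (@big_cat_nat _ _ _ N 0 (2 * N)%N) //=; last by lia.
  by rewrite lerDl sumr_ge0.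
have H2 : forall M, \sum_(0 <= k < (2 * M)%N) c k = \sum_(0 <= j < M) c (2 * j)%N.
  elim=> [|M IH]; first by rewrite !big_geq.
  rewrite (_ : (2 * M.+1 = (2 * M).+2)%N); last by lia.
  by rewrite !big_nat_recr //= IH c_odd addr0.
apply: (le_trans H1); rewrite H2 /series /= mulr_sumr.
apply: ler_sum => j _; rewrite c_even ler_pM2l //.
rewrite /exp_coeff /= exprM expr_div_n.
rewrite -[X in _ <= X]mulrA -invfM; apply: ler_wpM2l.
  by apply: exprn_ge0; apply: sqr_ge0.
rewrite lef_pV2 ?posrE ?ltr0n ?fact_gt0 ?mulr_gt0 ?exprn_gt0 //.
by rewrite -natrX -natrM ler_nat fact_ge.
Qed.
Lemma final_bound (R : realType) (P : probability coinT R) (HP : iid_uniform P)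
  n (mu c K : R) (cnd : pred nat) :
  (forall m, cnd m -> mu * (n%:R * c) <= mu * m%:R) ->
  (1 + expR mu) / 2 * expR (- (mu * c)) <= K ->
  (P ([set w | cnd (psum n w)] : set coinT) <= (K ^+ n)%:E)%E.
Proof.
move=> Hc HK.
rewrite event_measure // count_reindex lee_fin.
have H2 : 0 <= (2^-1 : R) ^+ n by rewrite exprn_ge0 // invr_ge0.
apply: le_trans (ler_wpM2r H2 (@chernoff_count R n _ _ _ Hc)) _.
have -> : expR (- (mu * (n%:R * c))) = expR (- (mu * c)) ^+ n.
  by rewrite -expRM_natl mulrN mulrCA.
rewrite -!exprMn.
have H0 : 0 <= (1 + expR mu) / 2 * expR (- (mu * c)).
  by rewrite mulr_ge0 ?expR_ge0 // divr_ge0 // addr_ge0 ?expR_ge0.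
have -> : expR (- (mu * c)) * (1 + expR mu) * 2^-1 = (1 + expR mu) / 2 * expR (- (mu * c)).
  by ring.
case: n {Hc H2} => [|n]; first by rewrite !expr0.
by rewrite ler_pXn2r // nnegrE (le_trans H0 HK).
Qed.

Lemma fb (R : realType) (x y : R) :
  (expR x + expR (- x)) / 2 * expR y <= expR (x ^+ 2 / 2 + y).
Proof. by rewrite expRD ler_wpM2r ?expR_ge0 // cosh_le. Qed.

Theorem lemma2p11 (R : realType) (P : probability coinT R)
    (HP : iid_uniform P) (eps : R) (n : nat) (heps : 0 < eps) :
  (P ([set w | (n%:R * (2^-1 + eps) <= (psum n w)%:R :> R)%R] : set coinT)
     <= (expR (- (2 * eps ^+ 2 * n%:R))%R)%:E)%E /\
  (P ([set w | ((psum n w)%:R <= n%:R * (2^-1 - eps) :> R)%R] : set coinT)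
     <= (expR (- (2 * eps ^+ 2 * n%:R))%R)%:E)%E.
Proof.
have En : expR (- (2 * eps ^+ 2 * n%:R)) = expR (- (2 * eps ^+ 2)) ^+ n.
  by rewrite -expRM_natl mulrN mulrC.
rewrite En; split.
- apply: (@final_bound R P HP n (4 * eps) (2^-1 + eps) _
            (fun m => n%:R * (2^-1 + eps) <= m%:R)).
    move=> m /= Hm; rewrite ler_wpM2l // mulr_ge0 // ltW //.
  have E1 : expR (- (4 * eps * (2^-1 + eps))) = expR (- (2 * eps)) * expR (- (4 * eps ^+ 2)).
    by rewrite -expRD; congr expR; field.
  have E2 : expR (4 * eps) * expR (- (2 * eps)) = expR (2 * eps).
    by rewrite -expRD; congr expR; ring.
  rewrite E1.
  have -> : (1 + expR (4 * eps)) / 2 * (expR (- (2 * eps)) * expR (- (4 * eps ^+ 2)))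
      = (expR (2 * eps) + expR (- (2 * eps))) / 2 * expR (- (4 * eps ^+ 2)).
    by rewrite -E2; field.
  apply: le_trans (fb _ _ _) _; rewrite ler_expR.
  have -> : (2 * eps) ^+ 2 / 2 + - (4 * eps ^+ 2) = - (2 * eps ^+ 2) by field.
  exact: lexx.
- apply: (@final_bound R P HP n (- (4 * eps)) (2^-1 - eps) _
            (fun m => m%:R <= n%:R * (2^-1 - eps))).
    move=> m /= Hm; rewrite !mulNr lerN2 ler_wpM2l // mulr_ge0 // ltW //.
  have E1 : expR (- (- (4 * eps) * (2^-1 - eps))) = expR (2 * eps) * expR (- (4 * eps ^+ 2)).
    by rewrite -expRD; congr expR; field.
  have E2 : expR (- (4 * eps)) * expR (2 * eps) = expR (- (2 * eps)).
    by rewrite -expRD; congr expR; ring.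
  rewrite E1.
  have -> : (1 + expR (- (4 * eps))) / 2 * (expR (2 * eps) * expR (- (4 * eps ^+ 2)))
      = (expR (2 * eps) + expR (- (2 * eps))) / 2 * expR (- (4 * eps ^+ 2)).
    by rewrite -E2; field.
  apply: le_trans (fb _ _ _) _; rewrite ler_expR.
  have -> : (2 * eps) ^+ 2 / 2 + - (4 * eps ^+ 2) = - (2 * eps ^+ 2) by field.
  exact: lexx.
Qed.
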